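(* Let $r\in(0,1)$ and let $(\eta(t))_{t\in\mathbb{Z}_+}$ be the nonlinear process with $\mathbb{E}(\eta(0))=r$. Then on a common probability space one can construct this nonlinear process together with an M/D/1 queue $(\zeta(t))_{t\in\mathbb{Z}_+}$ with arrival rate $r$ and $\zeta(0)=\eta(0)$ such that $\eta(t)\le\zeta(t)$ almost surely for every $t\ge 0$. Consequently, if moreover $\mathbb{E}(e^{\lambda_0\eta(0)})<\infty$ for some $\lambda_0>0$, then there is $\lambda>0$ with $\sup_{t\ge0}\mathbb{E}(e^{\lambda\eta(t)})<\infty$.
   Context: The nonlinear process $(\eta(t))_{t\in\mathbb{Z}_+}$ takes values in $\mathbb{Z}_+$: $\eta(0)$ has a given distribution; given $\eta(t)$, set $\rho(t):=\mathbb{P}(\eta(t)>0)$, let $N_{t+1}$ be Poisson with mean $\rho(t)$ (mean $0$ meaning identically $0$), independent of everything before, and set $\eta(t+1):=\eta(t)-\mathbf{1}(\eta(t)>0)+N_{t+1}$. The M/D/1 queue with arrival rate $\rho\ge 0$ is the Markov chain $(\zeta(t))_{t\in\mathbb{Z}_+}$ on $\mathbb{Z}_+$ given by $\zeta(t+1):=\zeta(t)-\mathbf{1}(\zeta(t)>0)+M_{t+1}$, where $(M_t)_{t\ge1}$ are i.i.d. Poisson random variables with mean $\rho$, independent of $\zeta(0)$. *)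

(* Defs.v *)
From Stdlib Require Import Reals List Arith.
Import ListNotations.
Open Scope R_scope.

(* Poisson pmf with mean m (m = 0 gives the point mass at 0, since 0^0 = 1). *)
Definition pois (m : R) (k : nat) : R := exp (- m) * m ^ k / INR (fact k).

(* One-step transition kernel of  x |-> x - 1(x>0) + N,  N ~ Poisson(rho). *)
Definition K (rho : R) (x y : nat) : R :=
  if Nat.leb (Nat.pred x) y then pois rho (y - Nat.pred x) else 0.

(* Laws mu t of eta(t) for the nonlinear process with initial law mu0;
   rho(t) = P(eta(t) > 0) = 1 - mu t 0. *)
Fixpoint mu (mu0 : nat -> R) (t : nat) : nat -> R :=
  match t with
  | O => mu0
  | S t' => let m := mu mu0 t' in
            fun n => sum_f_R0 (fun k => m k * K (1 - m 0%nat) k n) (S n)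
  end.

Definition rho_nl (mu0 : nat -> R) (t : nat) : R := 1 - mu mu0 t 0%nat.

(* Finite-dimensional distributions of a (time-inhomogeneous) chain with
   initial law init and Poisson rate rates t at step t -> t+1.
   A list [x0; ...; xT] is a trajectory up to time T. *)
Fixpoint chain (rates : nat -> R) (t x : nat) (rest : list nat) : R :=
  match rest with
  | [] => 1
  | y :: r => K (rates t) x y * chain rates (S t) y r
  end.

Definition fdd (init : nat -> R) (rates : nat -> R) (xs : list nat) : R :=
  match xs with
  | [] => 1
  | x :: r => init x * chain rates 0%nat x r
  end.

Definition fdd_eta (mu0 : nat -> R) := fdd mu0 (rho_nl mu0).
Definition fdd_MD1 (r : R) (mu0 : nat -> R) := fdd mu0 (fun _ => r).

(* lsum_is n f s : the (iterated, nonnegative) sum of f over all lists of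
   naturals of length n equals s. *)
Inductive lsum_is : nat -> (list nat -> R) -> R -> Prop :=
| lsum_O : forall f, lsum_is 0%nat f (f [])
| lsum_S : forall n f (g : nat -> R) s,
    (forall a, lsum_is n (fun l => f (a :: l)) (g a)) ->
    infinite_sum g s -> lsum_is (S n) f s.

(* P is the law of a coupled process (eta(t), zeta(t))_t, given through its
   projective (Kolmogorov-consistent) family of finite-dimensional
   distributions: P [(x0,y0);...;(xT,yT)] = Prob(eta(s)=xs, zeta(s)=ys, s<=T). *)
Definition is_process_law (P : list (nat * nat) -> R) : Prop :=
  (forall l, 0 <= P l) /\ P [] = 1 /\
  (forall l, exists g : nat -> R,
      (forall a, infinite_sum (fun b => P (l ++ [(a, b)])) (g a)) /\
      infinite_sum g (P l)).

Definition marg1 (P : list (nat * nat) -> R) (F : list nat -> R) : Prop :=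
  forall xs, lsum_is (length xs) (fun ys => P (combine xs ys)) (F xs).
Definition marg2 (P : list (nat * nat) -> R) (F : list nat -> R) : Prop :=
  forall ys, lsum_is (length ys) (fun xs => P (combine xs ys)) (F ys).

Definition dominated (P : list (nat * nat) -> R) : Prop :=
  forall l, P l <> 0 ->
    Forall (fun p => (fst p <= snd p)%nat) l /\
    match l with (a, b) :: _ => a = b | [] => True end.

(* Main.v *)
Require Import Defs.
From Stdlib Require Import Reals List Arith Lia Lra.
From Coquelicot Require Import Coquelicot.
Import ListNotations.
Open Scope R_scope.

Lemma isR_ext (a b : nat -> R) (l : R) : (forall n, a n = b n) -> is_series a l -> is_series b l.
Proof. apply (is_series_ext (V:=R_NormedModule)). Qed.
Lemma isR_scal (c : R) (a : nat -> R) (l : R) : is_series a l -> is_series (fun n => c * a n) (c * l).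
Proof. intro H. exact (is_series_scal_l c a l H). Qed.
Lemma isR_scal_r (c : R) (a : nat -> R) (l : R) : is_series a l -> is_series (fun n => a n * c) (l * c).
Proof. intro H. apply (isR_ext (fun n => c * a n)). intro; ring.
  replace (l*c) with (c*l) by ring. now apply isR_scal. Qed.
Lemma isR_plus (a b : nat -> R) (la lb : R) : is_series a la -> is_series b lb -> is_series (fun n => a n + b n) (la + lb).
Proof. intros H1 H2. exact (is_series_plus a b la lb H1 H2). Qed.
Lemma isR_minus (a b : nat -> R) (la lb : R) : is_series a la -> is_series b lb -> is_series (fun n => a n - b n) (la - lb).
Proof. intros H1 H2. exact (is_series_minus a b la lb H1 H2). Qed.
Lemma isR_incr1 (a : nat -> R) (l : R) : is_series a l -> is_series (fun k => a (S k)) (l - a 0%nat).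
Proof. intro H. apply is_series_incr_1.
  replace (plus _ _) with l. exact H. unfold plus; simpl. ring. Qed.
Lemma isR_decr1 (a : nat -> R) (l : R) : is_series (fun k => a (S k)) (l - a 0%nat) -> is_series a l.
Proof. intro H. apply is_series_decr_1.
  replace (plus _ _) with (l - a 0%nat). exact H. unfold plus, opp; simpl. ring. Qed.
Lemma isR_uniq (a : nat -> R) (l l' : R) : is_series a l -> is_series a l' -> l = l'.
Proof. intros H1 H2. rewrite <- (is_series_unique _ _ H1). now apply is_series_unique. Qed.

Lemma sum_f_stable (f : nat -> R) (M k : nat) : (forall n, (n > M)%nat -> f n = 0) -> sum_f_R0 f (M + k) = sum_f_R0 f M.
Proof. intro H. induction k. now rewrite Nat.add_0_r.
  rewrite Nat.add_succ_r. simpl. rewrite IHk, H by lia. ring. Qed.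
Lemma isR_finite (f : nat -> R) (M : nat) : (forall n, (n > M)%nat -> f n = 0) -> is_series f (sum_f_R0 f M).
Proof. intro H. apply is_series_Reals. intros eps He. exists M. intros n Hn.
  replace n with (M + (n - M))%nat by lia. rewrite sum_f_stable by auto.
  unfold R_dist. rewrite Rminus_eq_0, Rabs_R0. exact He. Qed.

Lemma isR_zero : is_series (fun _ => 0) 0.
Proof. pose proof (isR_finite (fun _ => 0) 0 (fun _ _ => eq_refl)) as H. simpl in H. exact H. Qed.

Lemma isR_delta0 (c : R) : is_series (fun k => match k with O => c | _ => 0 end) c.
Proof. apply (isR_finite (fun k => match k with O => c | _ => 0 end) 0). intros [|n] H; [lia|auto]. Qed.

Lemma isR_shift (f : nat -> R) (s : R) (c : nat) : is_series f s -> is_series (fun b => if Nat.leb c b then f (b - c)%nat else 0) s.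
Proof. revert f s. induction c; intros f s H.
  - apply (isR_ext f). intro n. simpl. now rewrite Nat.sub_0_r. exact H.
  - apply isR_decr1. simpl. rewrite Rminus_0_r. now apply IHc. Qed.

Lemma isR_point (a : nat) (c : R) : is_series (fun b => if Nat.eqb a b then c else 0) c.
Proof. apply (isR_ext (fun b => if Nat.leb a b then (fun k => match k with O => c | _ => 0 end) (b - a)%nat else 0)).
  intro b. destruct (Nat.eqb_spec a b). subst. rewrite Nat.leb_refl, Nat.sub_diag. auto.
  destruct (Nat.leb_spec a b). destruct (b - a)%nat eqn:E. lia. auto. auto.
  apply (isR_shift (fun k => match k with O => c | _ => 0 end) c a), isR_delta0. Qed.

Lemma isR_le_sum (f : nat -> R) (s : R) (N : nat) : is_series f s -> (forall n, 0 <= f n) -> sum_f_R0 f N <= s.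
Proof. intros H Hp. apply sum_incr; auto. now apply is_series_Reals. Qed.
Lemma isR_term_le (f : nat -> R) (s : R) (N : nat) : is_series f s -> (forall n, 0 <= f n) -> f N <= s.
Proof. intros H Hp. eapply Rle_trans. 2: apply (isR_le_sum f s N H Hp).
  destruct N. simpl; lra. simpl. pose proof (cond_pos_sum f N Hp). lra. Qed.
Lemma isR_nonneg (f : nat -> R) (s : R) : is_series f s -> (forall n, 0 <= f n) -> 0 <= s.
Proof. intros H Hp. eapply Rle_trans. apply (Hp 0%nat). apply (isR_term_le f s 0 H Hp). Qed.
Lemma isR_ex_abs (f : nat -> R) (s : R) : is_series f s -> (forall n, 0 <= f n) -> ex_series (fun n => Rabs (f n)).
Proof. intros H Hp. exists s. apply (isR_ext f). intro n. rewrite Rabs_pos_eq; auto. exact H. Qed.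

Lemma exp_INR (l : R) (k : nat) : exp (l * INR k) = exp l ^ k.
Proof. induction k. simpl. rewrite Rmult_0_r. apply exp_0.
  rewrite S_INR, Rmult_plus_distr_l, Rmult_1_r, exp_plus, IHk. simpl. ring. Qed.

Lemma exp_series (x : R) : is_series (fun k => x ^ k / INR (fact k)) (exp x).
Proof. apply is_series_Reals. unfold exp. destruct (exist_exp x) as [l Hl]. simpl.
  unfold Pser in Hl. intros e He. destruct (Hl e He) as [N HN]. exists N. intros n Hn.
  replace (sum_f_R0 (fun k => x ^ k / INR (fact k)) n) with (sum_f_R0 (fun k => / INR (fact k) * x ^ k) n).
  auto. apply sum_eq. intros; unfold Rdiv; ring. Qed.

Lemma pois_nonneg (m : R) (k : nat) : 0 <= m -> 0 <= pois m k.
Proof. intro H. unfold pois. apply Rmult_le_pos. apply Rmult_le_pos. left; apply exp_pos.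
  now apply pow_le. left. apply Rinv_0_lt_compat. apply INR_fact_lt_0. Qed.

Lemma pois_sum (m : R) : is_series (pois m) 1.
Proof. apply (isR_ext (fun k => exp (- m) * (m ^ k / INR (fact k)))).
  intro; unfold pois, Rdiv; ring.
  replace 1 with (exp (-m) * exp m). apply isR_scal, exp_series.
  rewrite <- exp_plus. replace (-m + m) with 0 by ring. apply exp_0. Qed.

Lemma pois_mgf (m l : R) : is_series (fun k => pois m k * exp (l * INR k)) (exp (m * (exp l - 1))).
Proof. apply (isR_ext (fun k => exp (- m) * ((m * exp l) ^ k / INR (fact k)))).
  intro; unfold pois, Rdiv. rewrite exp_INR, Rpow_mult_distr. ring.
  replace (exp (m * (exp l - 1))) with (exp (-m) * exp (m * exp l)). apply isR_scal, exp_series.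
  rewrite <- exp_plus. f_equal. ring. Qed.

Lemma pois_mean (m : R) : is_series (fun k => INR k * pois m k) m.
Proof. apply isR_decr1. replace (m - INR 0 * pois m 0) with m by (simpl; ring).
  apply (isR_ext (fun j => m * pois m j)). 2: { pose proof (isR_scal m _ _ (pois_sum m)) as H. rewrite Rmult_1_r in H. exact H. }
  intro j. unfold pois. change (fact (S j)) with (S j * fact j)%nat. rewrite mult_INR.
  rewrite <- tech_pow_Rmult. field. split. apply INR_fact_neq_0. apply not_0_INR. lia. Qed.

Lemma pois_conv (a b : R) (M : nat) :
  sum_f_R0 (fun N => pois a N * pois b (M - N)) M = pois (a + b) M.
Proof.
  assert (E : exp (- (a + b)) = exp (- a) * exp (- b)) by (rewrite <- exp_plus; f_equal; ring).
  transitivity (sum_f_R0 (fun i => (Binomial.C M i * a ^ i * b ^ (M - i)) * (exp (-(a+b)) / INR (fact M))) M).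
  - apply sum_eq. intros i Hi. unfold Binomial.C, pois. rewrite E. field.
    repeat split; apply INR_fact_neq_0.
  - rewrite <- scal_sum, <- binomial. unfold pois. unfold Rdiv. ring. Qed.

Lemma K_sum (a0 : R) (x : nat) : is_series (fun u => K a0 x u) 1.
Proof. unfold K. apply (isR_shift (pois a0) 1 (pred x)), pois_sum. Qed.

Lemma K_nonneg (a0 : R) (x u : nat) : 0 <= a0 -> 0 <= K a0 x u.
Proof. intro H. unfold K. destruct (Nat.leb _ _). now apply pois_nonneg. lra. Qed.

Definition Qk (a0 a1 : R) (x y u v : nat) : R :=
  K a0 x u * (if Nat.leb (pred y + (u - pred x)) v then pois a1 (v - (pred y + (u - pred x))) else 0).

Lemma Q_nonneg a0 a1 x y u v : 0 <= a0 -> 0 <= a1 -> 0 <= Qk a0 a1 x y u v.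
Proof. intros H0 H1. unfold Qk. apply Rmult_le_pos. now apply K_nonneg.
  destruct (Nat.leb _ _). now apply pois_nonneg. lra. Qed.

Lemma Q_sum_v a0 a1 x y u : is_series (fun v => Qk a0 a1 x y u v) (K a0 x u).
Proof. unfold Qk. pose proof (isR_scal (K a0 x u) _ _ (isR_shift (pois a1) 1 (pred y + (u - pred x)) (pois_sum a1))) as H.
  rewrite Rmult_1_r in H. exact H. Qed.

Lemma Q_sum_u a0 a1 x y v : is_series (fun u => Qk a0 a1 x y u v) (K (a0 + a1) y v).
Proof.
  set (f := fun N => pois a0 N * (if Nat.leb (pred y + N) v then pois a1 (v - (pred y + N)) else 0)).
  apply (isR_ext (fun u => if Nat.leb (pred x) u then f (u - pred x)%nat else 0)).
  { intro u. unfold Qk, K, f. destruct (Nat.leb (pred x) u); ring. }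
  apply isR_shift. unfold K.
  destruct (Nat.leb_spec (pred y) v) as [Hle|Hlt].
  - replace (pois (a0 + a1) (v - pred y)) with (sum_f_R0 f (v - pred y)).
    apply isR_finite. intros n Hn. unfold f. destruct (Nat.leb_spec (pred y + n) v). lia. ring.
    rewrite <- pois_conv. apply sum_eq. intros i Hi. unfold f.
    destruct (Nat.leb_spec (pred y + i) v). f_equal. f_equal. lia. lia.
  - apply (isR_ext (fun _ => 0)). intro n. unfold f. destruct (Nat.leb_spec (pred y + n) v). lia. ring.
    apply isR_zero. Qed.

Lemma Q_support a0 a1 x y u v : (x <= y)%nat -> Qk a0 a1 x y u v <> 0 -> (u <= v)%nat.
Proof. unfold Qk, K. intros Hxy H.
  destruct (Nat.leb_spec (pred x) u); [| elim H; ring].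
  destruct (Nat.leb_spec (pred y + (u - pred x)) v); [lia | elim H; ring]. Qed.

Definition mp (m : nat -> R) (j : nat) : R :=
  match j with O => m 0%nat + m 1%nat | S j' => m (S (S j')) end.

Lemma sum_delta0 (c : R) (n : nat) : sum_f_R0 (fun k => match k with O => c | _ => 0 end) n = c.
Proof. induction n; simpl. ring. rewrite IHn; ring. Qed.

Lemma mu_S (mu0 : nat -> R) (t n : nat) :
  mu mu0 (S t) n = sum_f_R0 (fun k => mu mu0 t k * K (1 - mu mu0 t 0%nat) k n) (S n).
Proof. reflexivity. Qed.

Lemma conv_eq (m : nat -> R) (rho : R) (n : nat) :
  sum_f_R0 (fun k => m k * K rho k n) (S n) = sum_f_R0 (fun k => mp m k * pois rho (n - k)) n.
Proof.
  rewrite decomp_sum by lia. simpl pred.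
  transitivity (sum_f_R0 (fun k => m (S k) * pois rho (n - k) + match k with O => m 0%nat * pois rho n | _ => 0 end) n).
  - rewrite plus_sum, sum_delta0. rewrite Rplus_comm. f_equal.
    + apply sum_eq. intros i Hi. unfold K. simpl pred. destruct (Nat.leb_spec i n). reflexivity. lia.
    + unfold K. simpl. rewrite Nat.sub_0_r. reflexivity.
  - apply sum_eq. intros i Hi. destruct i; simpl. rewrite Nat.sub_0_r. ring. ring. Qed.

Definition Inv (mu0 : nat -> R) (r : R) (t : nat) : Prop :=
  (forall n, 0 <= mu mu0 t n) /\ is_series (mu mu0 t) 1 /\ is_series (fun n => INR n * mu mu0 t n) r.

Lemma Inv_rho (mu0 : nat -> R) (r : R) (t : nat) : Inv mu0 r t -> 0 <= 1 - mu mu0 t 0%nat <= r.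
Proof. intros [Hp [Hs Hm]]. split.
  - pose proof (isR_term_le _ _ 0 Hs Hp). lra.
  - set (d := fun n => (INR n * mu mu0 t n - mu mu0 t n) + match n with O => mu mu0 t 0%nat | _ => 0 end).
    assert (Hd : is_series d ((r - 1) + mu mu0 t 0%nat)).
    { apply isR_plus. apply isR_minus; auto. apply isR_delta0. }
    assert (0 <= (r - 1) + mu mu0 t 0%nat). { apply (isR_nonneg d). exact Hd.
      intros [|n]; unfold d. simpl. lra. rewrite S_INR. specialize (Hp (S n)).
      pose proof (pos_INR n). nra. }
    lra. Qed.

Lemma mp_sum (m : nat -> R) : is_series m 1 -> is_series (mp m) 1.
Proof. intro H. apply (isR_ext (fun k => m (S k) + match k with O => m 0%nat | _ => 0 end)).
  intros [|k]; simpl; ring.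
  pose proof (isR_plus _ _ _ _ (isR_incr1 _ _ H) (isR_delta0 (m 0%nat))) as H'.
  replace (1 - m 0%nat + m 0%nat) with 1 in H' by ring. exact H'. Qed.

Lemma mp_mean (m : nat -> R) (r : R) : is_series m 1 -> is_series (fun n => INR n * m n) r ->
  is_series (fun k => INR k * mp m k) (r - (1 - m 0%nat)).
Proof. intros H1 H2. apply (isR_ext (fun k => INR (S k) * m (S k) - m (S k))).
  intros [|k]. simpl. ring. unfold mp. rewrite S_INR. ring.
  replace (r - (1 - m 0%nat)) with ((r - INR 0 * m 0%nat) - (1 - m 0%nat)) by (simpl; ring).
  apply isR_minus. apply (isR_incr1 (fun n => INR n * m n)). exact H2. now apply isR_incr1. Qed.

Lemma mp_mgf (m : nat -> R) (l s : R) : is_series (fun n => m n * exp (l * INR n)) s ->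
  is_series (fun k => mp m k * exp (l * INR k)) (exp (- l) * (s - m 0%nat) + m 0%nat).
Proof. intro H. apply (isR_ext (fun k => exp (- l) * (m (S k) * exp (l * INR (S k))) + match k with O => m 0%nat | _ => 0 end)).
  { intros [|k]; unfold mp.
    - simpl INR. rewrite Rmult_1_r, Rmult_0_r, exp_0.
      replace (exp (- l) * (m 1%nat * exp l)) with (m 1%nat * (exp (-l) * exp l)) by ring.
      rewrite <- exp_plus. replace (-l + l) with 0 by ring. rewrite exp_0. ring.
    - rewrite (S_INR (S k)), Rmult_plus_distr_l, Rmult_1_r, exp_plus.
      replace (exp (- l) * (m (S (S k)) * (exp (l * INR (S k)) * exp l)) + 0) with
        (m (S (S k)) * exp (l * INR (S k)) * (exp (-l) * exp l)) by ring.
      rewrite <- exp_plus. replace (-l + l) with 0 by ring. rewrite exp_0. ring. }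
  apply isR_plus. 2: apply isR_delta0. apply isR_scal.
  pose proof (isR_incr1 _ _ H) as H'. cbv beta in H'. replace (s - m 0%nat * exp (l * INR 0)) with (s - m 0%nat) in H'. exact H'. simpl INR. rewrite Rmult_0_r, exp_0. ring. Qed.

Lemma mu_S_conv (mu0 : nat -> R) (t n : nat) :
  mu mu0 (S t) n = sum_f_R0 (fun k => mp (mu mu0 t) k * pois (1 - mu mu0 t 0%nat) (n - k)) n.
Proof. rewrite mu_S. apply conv_eq. Qed.

Lemma Inv_step (mu0 : nat -> R) (r : R) (t : nat) : Inv mu0 r t -> Inv mu0 r (S t).
Proof. intro HI. pose proof (Inv_rho _ _ _ HI) as Hrho. destruct HI as [Hp [Hs Hm]].
  set (m := mu mu0 t) in *. set (rho := 1 - m 0%nat) in *. destruct Hrho as [Hr0 Hr1].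
  assert (Hmp : forall k, 0 <= mp m k). { intros [|k]; simpl; [pose proof (Hp 0%nat); pose proof (Hp 1%nat); lra| apply Hp]. }
  assert (Hpp : forall k, 0 <= pois rho k) by (intro; apply pois_nonneg; exact Hr0).
  assert (Hms := mp_sum m Hs). assert (Hmm := mp_mean m r Hs Hm). fold rho in Hmm.
  split; [|split].
  - intro n. rewrite mu_S. apply cond_pos_sum. intro k. apply Rmult_le_pos. apply Hp. apply K_nonneg. exact Hr0.
  - pose proof (is_series_mult _ _ _ _ Hms (pois_sum rho) (isR_ex_abs _ _ Hms Hmp) (isR_ex_abs _ _ (pois_sum rho) Hpp)) as H.
    rewrite Rmult_1_r in H. apply (isR_ext _ _ _ (fun n => eq_sym (mu_S_conv mu0 t n))). exact H.
  - assert (Hmpos : forall k, 0 <= INR k * mp m k) by (intro; apply Rmult_le_pos; [apply pos_INR|auto]).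
    assert (Hppos : forall k, 0 <= INR k * pois rho k) by (intro; apply Rmult_le_pos; [apply pos_INR|auto]).
    pose proof (is_series_mult _ _ _ _ Hmm (pois_sum rho) (isR_ex_abs _ _ Hmm Hmpos) (isR_ex_abs _ _ (pois_sum rho) Hpp)) as H1.
    pose proof (is_series_mult _ _ _ _ Hms (pois_mean rho) (isR_ex_abs _ _ Hms Hmp) (isR_ex_abs _ _ (pois_mean rho) Hppos)) as H2.
    pose proof (isR_plus _ _ _ _ H1 H2) as H.
    replace ((r - rho) * 1 + 1 * rho) with r in H by ring.
    refine (isR_ext _ _ _ _ H).
    intro n. rewrite (mu_S_conv mu0 t n). fold m. fold rho. rewrite <- plus_sum, scal_sum. apply sum_eq.
    intros i Hi. rewrite minus_INR by lia. ring. Qed.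

Lemma Inv_all (mu0 : nat -> R) (r : R) (t : nat) : Inv mu0 r 0 -> Inv mu0 r t.
Proof. intro H. induction t. exact H. now apply Inv_step. Qed.

Lemma exp_mono (x y : R) : x <= y -> exp x <= exp y.
Proof. intro H. destruct (Rle_lt_or_eq_dec _ _ H). left; now apply exp_increasing. subst; lra. Qed.

Lemma mgf_step (mu0 : nat -> R) (r : R) (t : nat) (l s : R) : Inv mu0 r t ->
  is_series (fun n => mu mu0 t n * exp (l * INR n)) s ->
  is_series (fun n => mu mu0 (S t) n * exp (l * INR n))
    ((exp (- l) * (s - mu mu0 t 0%nat) + mu mu0 t 0%nat) * exp ((1 - mu mu0 t 0%nat) * (exp l - 1))).
Proof. intros HI Hs. pose proof (Inv_rho _ _ _ HI) as [Hr0 Hr1]. destruct HI as [Hp _].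
  set (m := mu mu0 t) in *. set (rho := 1 - m 0%nat) in *.
  pose proof (mp_mgf m l s Hs) as H1. pose proof (pois_mgf rho l) as H2.
  assert (P1 : forall k, 0 <= mp m k * exp (l * INR k)).
  { intros [|k]; apply Rmult_le_pos; try (left; apply exp_pos); simpl;
    [pose proof (Hp 0%nat); pose proof (Hp 1%nat); lra | apply Hp]. }
  assert (P2 : forall k, 0 <= pois rho k * exp (l * INR k)).
  { intro k. apply Rmult_le_pos. apply pois_nonneg; exact Hr0. left; apply exp_pos. }
  pose proof (is_series_mult _ _ _ _ H1 H2 (isR_ex_abs _ _ H1 P1) (isR_ex_abs _ _ H2 P2)) as H.
  refine (isR_ext _ _ _ _ H). intro n. rewrite (mu_S_conv mu0 t n). fold m. fold rho.
  rewrite Rmult_comm, scal_sum. apply sum_eq. intros i Hi.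
  replace (INR n) with (INR i + INR (n - i)) by (rewrite <- plus_INR; f_equal; lia).
  rewrite Rmult_plus_distr_l, exp_plus. ring. Qed.

Lemma mgf_bound (l r s m0 rho : R) : 0 < l -> 0 <= m0 <= 1 -> 0 <= rho <= r -> m0 <= s ->
  (exp (- l) * (s - m0) + m0) * exp (rho * (exp l - 1)) <=
  exp (r * (exp l - 1)) + exp (- l) * exp (r * (exp l - 1)) * s.
Proof. intros Hl Hm Hr Hs.
  assert (E1 : exp (-l) < 1) by (rewrite <- exp_0; apply exp_increasing; lra).
  assert (E0 : 0 < exp (-l)) by apply exp_pos.
  assert (El : 1 < exp l) by (rewrite <- exp_0; apply exp_increasing; lra).
  assert (F : exp (rho * (exp l - 1)) <= exp (r * (exp l - 1))) by (apply exp_mono; nra).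
  assert (F0 : 0 < exp (rho * (exp l - 1))) by apply exp_pos.
  set (A := exp (- l) * (s - m0) + m0).
  assert (A0 : 0 <= A) by (unfold A; nra).
  assert (A1 : A <= 1 + exp (-l) * s) by (unfold A; nra).
  set (E := exp (r * (exp l - 1))) in *. set (e := exp (rho * (exp l - 1))) in *.
  apply Rle_trans with (A * E). apply Rmult_le_compat_l; lra.
  replace (E + exp (- l) * E * s) with ((1 + exp (-l) * s) * E) by ring.
  apply Rmult_le_compat_r; lra. Qed.

Lemma part2 (mu0 : nat -> R) (r : R) : 0 < r < 1 -> Inv mu0 r 0 ->
  (exists l0 : R, 0 < l0 /\ exists s, infinite_sum (fun n => mu0 n * exp (l0 * INR n)) s) ->
   exists l : R, 0 < l /\ exists M : R, forall t : nat,
     exists s, infinite_sum (fun n => mu mu0 t n * exp (l * INR n)) s /\ s <= M.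
Proof. intros Hr HI0 [l0 [Hl0 [s0 Hs0]]].
  assert (Hln : ln r < 0) by (rewrite <- ln_1; apply ln_increasing; lra).
  set (lam := Rmin l0 (- ln r) / 2).
  assert (Hlam : 0 < lam) by (unfold lam; assert (0 < Rmin l0 (- ln r)) by (apply Rmin_glb_lt; lra); lra).
  assert (Hlam1 : lam <= l0) by (unfold lam; pose proof (Rmin_l l0 (- ln r)); lra).
  assert (Hlam2 : lam < - ln r) by (unfold lam; pose proof (Rmin_r l0 (- ln r)); lra).
  assert (Hre : r * exp lam < 1).
  { assert (exp lam < exp (- ln r)) by (apply exp_increasing; lra).
    rewrite exp_Ropp, exp_ln in H by lra.
    apply (Rmult_lt_compat_l r) in H; [|lra]. rewrite Rinv_r in H by lra. lra. }
  assert (Hmv : exp lam - 1 <= lam * exp lam).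
  { pose proof (exp_ineq1_le (- lam)). rewrite exp_Ropp in H.
    assert (0 < exp lam) by apply exp_pos.
    apply (Rmult_le_compat_r (exp lam)) in H; [|lra]. rewrite Rinv_l in H by lra. nra. }
  set (D := exp (r * (exp lam - 1))).
  set (c := exp (- lam) * D).
  assert (Hc : c < 1).
  { assert (H1 : r * (exp lam - 1) <= r * (lam * exp lam)) by (apply Rmult_le_compat_l; lra).
    assert (H2 : lam * (r * exp lam) < lam * 1) by (apply Rmult_lt_compat_l; lra).
    replace (r * (lam * exp lam)) with (lam * (r * exp lam)) in H1 by ring.
    assert (H3 : - lam + r * (exp lam - 1) < 0) by lra.
    apply exp_increasing in H3. rewrite exp_0, exp_plus in H3. exact H3. }
  assert (Hc0 : 0 < c) by (unfold c, D; apply Rmult_lt_0_compat; apply exp_pos).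
  assert (HD : 0 < D) by apply exp_pos.
  destruct HI0 as [Hp0 [Hsum0 Hmean0]].
  assert (Hex : ex_series (fun n => mu0 n * exp (lam * INR n))).
  { apply (@ex_series_le R_AbsRing R_CompleteNormedModule _ (fun n => mu0 n * exp (l0 * INR n))).
    - intro n. change (norm (mu0 n * exp (lam * INR n))) with (Rabs (mu0 n * exp (lam * INR n))).
      rewrite Rabs_pos_eq. apply Rmult_le_compat_l. apply Hp0. apply exp_mono.
      apply Rmult_le_compat_r. apply pos_INR. exact Hlam1.
      apply Rmult_le_pos. apply Hp0. left; apply exp_pos.
    - exists s0. now apply is_series_Reals. }
  destruct Hex as [sl Hsl].
  exists lam. split. exact Hlam. exists (Rmax sl (D / (1 - c))).
  assert (HI : forall t, Inv mu0 r t) by (intro t; apply Inv_all; split; auto).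
  intro t. induction t.
  - exists sl. split. now apply is_series_Reals. apply Rmax_l.
  - destruct IHt as [s [Hs HsB]]. apply is_series_Reals in Hs.
    pose proof (Inv_rho _ _ _ (HI t)) as Hrho.
    destruct (HI t) as [Hp [Hsum _]].
    assert (Hm1 : mu mu0 t 0%nat <= 1) by (apply (isR_term_le _ _ 0 Hsum Hp)).
    assert (Hms : mu mu0 t 0%nat <= s).
    { pose proof (isR_term_le _ _ 0 Hs (fun n => Rmult_le_pos _ _ (Hp n) (Rlt_le _ _ (exp_pos _)))) as H.
      cbv beta in H. simpl INR in H. rewrite Rmult_0_r, exp_0, Rmult_1_r in H. exact H. }
    eexists. split. apply is_series_Reals. apply (mgf_step mu0 r t lam s (HI t) Hs).
    eapply Rle_trans. apply mgf_bound; [exact Hlam | split; [apply Hp | exact Hm1] | exact Hrho | exact Hms].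
    fold D. fold c.
    assert (HB : D / (1 - c) <= Rmax sl (D / (1 - c))) by apply Rmax_r.
    assert (HB' : D <= (1 - c) * Rmax sl (D / (1 - c))).
    { apply (Rmult_le_compat_l (1 - c)) in HB; [|lra].
      replace ((1 - c) * (D / (1 - c))) with D in HB by (field; lra). exact HB. }
    nra. Qed.

Lemma last_cons {A : Type} (l : list A) (a d : A) : last (a :: l) d = last l a.
Proof. revert a d. induction l as [|b l IH]; intros a d. reflexivity.
  change (last (a :: b :: l) d) with (last (b :: l) d). rewrite IH.
  symmetry. apply IH. Qed.

Fixpoint cchain (mu0 : nat -> R) (r : R) (t : nat) (p : nat * nat) (rest : list (nat * nat)) : R :=
  match rest with
  | [] => 1
  | q :: rs => Qk (rho_nl mu0 t) (r - rho_nl mu0 t) (fst p) (snd p) (fst q) (snd q) * cchain mu0 r (S t) q rs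
  end.

Definition Pc (mu0 : nat -> R) (r : R) (l : list (nat * nat)) : R :=
  match l with
  | [] => 1
  | p :: rs => (if Nat.eqb (fst p) (snd p) then mu0 (fst p) else 0) * cchain mu0 r 0 p rs
  end.

Lemma cchain_snoc mu0 r (l : list (nat * nat)) : forall t p q,
  cchain mu0 r t p (l ++ [q]) = cchain mu0 r t p l *
    Qk (rho_nl mu0 (t + length l)) (r - rho_nl mu0 (t + length l)) (fst (last l p)) (snd (last l p)) (fst q) (snd q).
Proof. induction l as [|a l IH]; intros t p q.
  - simpl. rewrite Nat.add_0_r. ring.
  - simpl (cchain _ _ _ _ ((a :: l) ++ [q])). rewrite IH. rewrite last_cons. simpl length.
    replace (S t + length l)%nat with (t + S (length l))%nat by lia. simpl. ring. Qed.

Lemma chain_snoc rates (l : list nat) : forall t x y,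
  chain rates t x (l ++ [y]) = chain rates t x l * K (rates (t + length l)%nat) (last l x) y.
Proof. induction l as [|a l IH]; intros t x y.
  - simpl. rewrite Nat.add_0_r. ring.
  - simpl (chain _ _ _ ((a :: l) ++ [y])). rewrite IH. rewrite last_cons. simpl length.
    replace (S t + length l)%nat with (t + S (length l))%nat by lia. simpl. ring. Qed.

Lemma Pc_snoc mu0 r (l : list (nat * nat)) q : l <> [] ->
  Pc mu0 r (l ++ [q]) = Pc mu0 r l *
    Qk (rho_nl mu0 (pred (length l))) (r - rho_nl mu0 (pred (length l)))
       (fst (last l (0,0)%nat)) (snd (last l (0,0)%nat)) (fst q) (snd q).
Proof. destruct l as [|p rs]. congruence. intros _. simpl ((p :: rs) ++ [q]). unfold Pc.
  rewrite cchain_snoc, last_cons. simpl. ring. Qed.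

Lemma fdd_snoc init rates (xs : list nat) a : xs <> [] ->
  fdd init rates (xs ++ [a]) = fdd init rates xs * K (rates (pred (length xs))) (last xs 0%nat) a.
Proof. destruct xs as [|x xs]. congruence. intros _. simpl ((x :: xs) ++ [a]). unfold fdd.
  rewrite chain_snoc, last_cons. simpl. ring. Qed.

Lemma combine_snoc (xs ys : list nat) a b : length xs = length ys ->
  combine (xs ++ [a]) (ys ++ [b]) = combine xs ys ++ [(a, b)].
Proof. revert ys. induction xs as [|x xs IH]; intros [|y ys] H; simpl in *; try congruence.
  f_equal. apply IH. lia. Qed.

Lemma last_combine (xs ys : list nat) : length xs = length ys ->
  last (combine xs ys) (0,0)%nat = (last xs 0%nat, last ys 0%nat).
Proof. revert ys. induction xs as [|x xs IH]; intros [|y ys] H; simpl in *; try congruence.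
  destruct xs as [|x' xs']; destruct ys as [|y' ys']; simpl in *; try congruence.
  specialize (IH (y' :: ys') ltac:(simpl; lia)). simpl in IH. exact IH. Qed.

Lemma lsum_val n f s s' : lsum_is n f s -> s = s' -> lsum_is n f s'.
Proof. intros H E. now subst. Qed.

Lemma lsum_scal_r n : forall f s c, lsum_is n f s -> lsum_is n (fun l => f l * c) (s * c).
Proof. induction n; intros f s c H; inversion H; subst.
  - constructor.
  - apply (lsum_S n _ (fun a => g a * c)). intro a. now apply (IHn (fun l => f (a :: l))).
    apply is_series_Reals. apply isR_scal_r. now apply is_series_Reals. Qed.

Lemma lsum_snoc n : forall f h s,
  (forall l, length l = n -> is_series (fun a => f (l ++ [a])) (h l)) ->
  lsum_is n h s -> lsum_is (S n) f s.
Proof. induction n; intros f h s Hf Hh.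
  - inversion Hh; subst. apply (lsum_S 0 f (fun a => f [a])).
    + intro a. constructor.
    + apply is_series_Reals. apply (Hf [] eq_refl).
  - inversion Hh; subst. apply (lsum_S (S n) f g); auto.
    intro a. apply (IHn (fun l => f (a :: l)) (fun l => h (a :: l))); auto.
    intros l Hl. apply (Hf (a :: l)). simpl; lia. Qed.

Lemma rho_bounds mu0 r : Inv mu0 r 0 -> forall t, 0 <= rho_nl mu0 t /\ 0 <= r - rho_nl mu0 t.
Proof. intros H t. pose proof (Inv_rho _ _ _ (Inv_all mu0 r t H)). unfold rho_nl. lra. Qed.

Lemma cchain_nonneg mu0 r : Inv mu0 r 0 -> forall rs t p, 0 <= cchain mu0 r t p rs.
Proof. intros H. induction rs; intros t p; simpl. lra.
  apply Rmult_le_pos; auto. destruct (rho_bounds mu0 r H t). now apply Q_nonneg. Qed.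

Lemma Pc_nonneg mu0 r : Inv mu0 r 0 -> forall l, 0 <= Pc mu0 r l.
Proof. intros H [|p rs]; simpl. lra. apply Rmult_le_pos. destruct (Nat.eqb _ _). apply H. lra.
  now apply cchain_nonneg. Qed.

Lemma Pc_law mu0 r : Inv mu0 r 0 -> is_process_law (Pc mu0 r).
Proof. intro H. split; [|split]. now apply Pc_nonneg. reflexivity.
  intro l. destruct l as [|p rs].
  - exists mu0. split.
    + intro a. apply is_series_Reals. simpl. apply (isR_ext (fun b => if Nat.eqb a b then mu0 a else 0)).
      intro b. destruct (Nat.eqb a b); ring. apply isR_point.
    + apply is_series_Reals. destruct H as [_ [H _]]. exact H.
  - set (l := p :: rs).
    exists (fun a => Pc mu0 r l * K (rho_nl mu0 (pred (length l))) (fst (last l (0,0)%nat)) a). split.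
    + intro a. apply is_series_Reals. apply (isR_ext (fun b => Pc mu0 r l *
        Qk (rho_nl mu0 (pred (length l))) (r - rho_nl mu0 (pred (length l)))
       (fst (last l (0,0)%nat)) (snd (last l (0,0)%nat)) a b)).
      intro b. rewrite Pc_snoc. reflexivity. unfold l; congruence.
      apply isR_scal, Q_sum_v.
    + apply is_series_Reals. pose proof (isR_scal (Pc mu0 r l) _ _ (K_sum (rho_nl mu0 (pred (length l))) (fst (last l (0,0)%nat)))) as H'.
      rewrite Rmult_1_r in H'. exact H'. Qed.

Lemma Pc_marg1 mu0 r : marg1 (Pc mu0 r) (fdd_eta mu0).
Proof. intro xs. induction xs as [|a xs IH] using rev_ind.
  - simpl. apply (lsum_O (fun ys => Pc mu0 r (combine [] ys))).
  - rewrite length_app, Nat.add_comm. simpl (length [a]) . simpl plus.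
    destruct xs as [|x0 xs0].
    + apply (lsum_snoc 0 _ (fun _ => mu0 a)).
      * intros [|y l] Hl; [|simpl in Hl; lia]. simpl.
        apply (isR_ext (fun b => if Nat.eqb a b then mu0 a else 0)).
        intro b. destruct (Nat.eqb a b); ring. apply isR_point.
      * apply (lsum_val _ _ _ _ (lsum_O _)). unfold fdd_eta, fdd. simpl. ring.
    + set (X := x0 :: xs0) in *.
      apply (lsum_snoc _ _ (fun ys => Pc mu0 r (combine X ys) * K (rho_nl mu0 (pred (length X))) (last X 0%nat) a)).
      * intros l Hl. apply (isR_ext (fun b => Pc mu0 r (combine X l) *
          Qk (rho_nl mu0 (pred (length X))) (r - rho_nl mu0 (pred (length X))) (last X 0%nat) (last l 0%nat) a b)).
        { intro b. rewrite combine_snoc by auto. rewrite Pc_snoc.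
          rewrite last_combine by auto. rewrite length_combine, Hl, Nat.min_id. reflexivity.
          destruct l; [simpl in Hl; unfold X in Hl; simpl in Hl; lia| unfold X; simpl; congruence]. }
        apply isR_scal, Q_sum_v.
      * unfold fdd_eta. rewrite fdd_snoc by (unfold X; congruence).
        apply lsum_scal_r. exact IH. Qed.

Lemma Pc_marg2 mu0 r : marg2 (Pc mu0 r) (fdd_MD1 r mu0).
Proof. intro ys. induction ys as [|b ys IH] using rev_ind.
  - simpl. apply (lsum_O (fun xs => Pc mu0 r (combine xs []))).
  - rewrite length_app, Nat.add_comm. simpl (length [b]) . simpl plus.
    destruct ys as [|y0 ys0].
    + apply (lsum_snoc 0 _ (fun _ => mu0 b)).
      * intros [|x l] Hl; [|simpl in Hl; lia]. simpl.
        apply (isR_ext (fun a => if Nat.eqb b a then mu0 b else 0)).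
        intro a. destruct (Nat.eqb_spec b a); destruct (Nat.eqb_spec a b); subst; try ring; congruence.
        apply isR_point.
      * apply (lsum_val _ _ _ _ (lsum_O _)). unfold fdd_MD1, fdd. simpl. ring.
    + set (Y := y0 :: ys0) in *.
      apply (lsum_snoc _ _ (fun xs => Pc mu0 r (combine xs Y) * K r (last Y 0%nat) b)).
      * intros l Hl. apply (isR_ext (fun a => Pc mu0 r (combine l Y) *
          Qk (rho_nl mu0 (pred (length Y))) (r - rho_nl mu0 (pred (length Y))) (last l 0%nat) (last Y 0%nat) a b)).
        { intro a. rewrite combine_snoc by auto. rewrite Pc_snoc.
          rewrite last_combine by auto. rewrite length_combine, Hl, Nat.min_id. reflexivity.
          destruct l; [simpl in Hl; unfold Y in Hl; simpl in Hl; lia| unfold Y; simpl; congruence]. }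
        pose proof (Q_sum_u (rho_nl mu0 (pred (length Y))) (r - rho_nl mu0 (pred (length Y))) (last l 0%nat) (last Y 0%nat) b) as HQ.
        replace (rho_nl mu0 (pred (length Y)) + (r - rho_nl mu0 (pred (length Y)))) with r in HQ by ring.
        apply isR_scal, HQ.
      * unfold fdd_MD1. rewrite fdd_snoc by (unfold Y; congruence).
        apply lsum_scal_r. exact IH. Qed.

Lemma cchain_dom (mu0 : nat -> R) (r : R) : forall (rs : list (nat * nat)) (t : nat) (p : nat * nat),
  (fst p <= snd p)%nat -> cchain mu0 r t p rs <> 0 ->
  List.Forall (fun q : nat * nat => (fst q <= snd q)%nat) rs.
Proof. induction rs as [|q rs IH]; intros t p Hp H. constructor.
  simpl in H. constructor.
  - apply (Q_support (rho_nl mu0 t) (r - rho_nl mu0 t) _ _ _ _ Hp). intro E. apply H. rewrite E. ring.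
  - apply (IH (S t) q). apply (Q_support (rho_nl mu0 t) (r - rho_nl mu0 t) _ _ _ _ Hp). intro E. apply H. rewrite E. ring.
    intro E. apply H. rewrite E. ring. Qed.

Lemma Pc_dom mu0 r : dominated (Pc mu0 r).
Proof. intros [|[x y] rs] H. split; constructor. simpl in H.
  destruct (Nat.eqb_spec x y); [|elim H; ring]. subst. split; [|reflexivity].
  constructor. simpl; lia. apply (cchain_dom mu0 r rs 0 (y, y)). simpl; lia.
  intro E. apply H. rewrite E. ring. Qed.

Theorem mainTheorem4 (r : R) (mu0 : nat -> R)
  (hr : 0 < r < 1)
  (hpos : forall n, 0 <= mu0 n)
  (hprob : infinite_sum mu0 1)
  (hmean : infinite_sum (fun n => INR n * mu0 n) r) :
  (exists P : list (nat * nat) -> R,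
      is_process_law P /\ marg1 P (fdd_eta mu0) /\ marg2 P (fdd_MD1 r mu0) /\
      dominated P) /\
  ((exists l0 : R, 0 < l0 /\ exists s, infinite_sum (fun n => mu0 n * exp (l0 * INR n)) s) ->
   exists l : R, 0 < l /\ exists M : R, forall t : nat,
     exists s, infinite_sum (fun n => mu mu0 t n * exp (l * INR n)) s /\ s <= M).
Proof.
  assert (HI : Inv mu0 r 0).
  { split; [exact hpos | split; apply is_series_Reals; assumption]. }
  split.
  - exists (Pc mu0 r). split; [now apply Pc_law|]. split; [apply Pc_marg1|]. split; [apply Pc_marg2|]. apply Pc_dom.
  - now apply (part2 mu0 r).
Qed.
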